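(* Let $G$ and $H$ be finite groups with $\mathrm{diam}(\Delta(G\times H))\le 2$. Then $\mathrm{diam}(\Delta(G))\le 2$ or $\mathrm{diam}(\Delta(H))\le 2$.
   Context: For a finite group $X$, the cyclic graph $\Delta(X)$ has vertex set $X^{\#}=X\setminus\{1\}$, and distinct vertices $x,y$ are adjacent if and only if the subgroup $\langle x,y\rangle$ is cyclic. The diameter is the maximum graph distance between two vertices, taken to be $\infty$ if the graph is disconnected. *)

(* Defs.v *)
From mathcomp Require Import all_boot all_fingroup all_solvable.
Set Implicit Arguments. Unset Strict Implicit. Unset Printing Implicit Defensive.
Local Open Scope group_scope.

(* Cyclic graph Delta(X) of a finite group X (taken as the whole finGroupType):
   vertices are the non-identity elements; distinct x, y adjacent iff <x,y> cyclic. *)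
Definition cyc_vertex (gT : finGroupType) (x : gT) : bool := x != 1.

Definition cyc_adj (gT : finGroupType) (x y : gT) : bool :=
  [&& x != 1, y != 1, x != y & cyclic <<[set x; y]>>].

Definition cyc_diam_le2 (gT : finGroupType) : Prop :=
  forall x y : gT, x != 1 -> y != 1 ->
    x = y \/ cyc_adj x y \/ exists z : gT, cyc_adj x z /\ cyc_adj z y.

(* Main.v *)
Require Import Defs.
From mathcomp Require Import all_boot all_fingroup all_solvable.
From Stdlib Require Import Classical.
Section Aux.
Local Open Scope group_scope.

Lemma fst_expg (gT hT : finGroupType) (w : gT * hT) n : (w ^+ n).1 = w.1 ^+ n.
Proof. by elim: n => [|n IH] //; rewrite !expgS /= IH. Qed.
Lemma snd_expg (gT hT : finGroupType) (w : gT * hT) n : (w ^+ n).2 = w.2 ^+ n.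
Proof. by elim: n => [|n IH] //; rewrite !expgS /= IH. Qed.

Lemma proj_cyc (gT hT : finGroupType) (x x' : gT) (y y' : hT) :
  cyclic <<[set (x,y); (x',y')]>> -> cyclic <<[set x; x']>> /\ cyclic <<[set y; y']>>.
Proof.
case/cyclicP => w Hw.
have h1: (x,y) \in <[w]> by rewrite -Hw mem_gen // !inE eqxx.
have h2: (x',y') \in <[w]> by rewrite -Hw mem_gen // !inE eqxx orbT.
case/cycleP: h1 => i Ei; case/cycleP: h2 => j Ej.
split.
- apply: (cyclicS (G:=<[w.1]>)) (cycle_cyclic _).
  rewrite gen_subG subUset !sub1set.
  have -> : x = (w ^+ i).1 by rewrite -Ei.
  have -> : x' = (w ^+ j).1 by rewrite -Ej.
  by rewrite !fst_expg !mem_cycle.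
- apply: (cyclicS (G:=<[w.2]>)) (cycle_cyclic _).
  rewrite gen_subG subUset !sub1set.
  have -> : y = (w ^+ i).2 by rewrite -Ei.
  have -> : y' = (w ^+ j).2 by rewrite -Ej.
  by rewrite !snd_expg !mem_cycle.
Qed.

Lemma bad_mid (gT : finGroupType) (a b c : gT) :
  a != 1 -> b != 1 -> a != b -> ~ cyc_adj a b ->
  ~ (exists z, cyc_adj a z /\ cyc_adj z b) ->
  cyclic <<[set a; c]>> -> cyclic <<[set c; b]>> -> c = 1.
Proof.
move=> a1 b1 ab nadj nz ac cb; apply/eqP; apply/negPn/negP => c1.
case: (eqVneq c a) => [Eca|nca].
  by apply: nadj; rewrite /cyc_adj a1 b1 ab -Eca.
case: (eqVneq c b) => [Ecb|ncb].
  by apply: nadj; rewrite /cyc_adj a1 b1 ab -Ecb.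
apply: nz; exists c; rewrite /cyc_adj a1 b1 c1 ac cb eq_sym nca ncb.
by split.
Qed.

End Aux.

Theorem theorem4p3 (gT hT : finGroupType) :
  cyc_diam_le2 (gT * hT)%type -> cyc_diam_le2 gT \/ cyc_diam_le2 hT.
Proof.
move=> D.
destruct (classic (cyc_diam_le2 gT)) as [G|G]; first by left.
destruct (classic (cyc_diam_le2 hT)) as [H|H]; first by right.
exfalso.
have [g1 Hg] : exists g1 g2 : gT, ~ (g1 != 1%g -> g2 != 1%g ->
    g1 = g2 \/ cyc_adj g1 g2 \/ exists z : gT, cyc_adj g1 z /\ cyc_adj z g2).
  by apply: NNPP => K; apply: G => x y; apply: NNPP => K2; apply: K; exists x, y.
case: Hg => g2 Hg2.
have [h1 Hh] : exists h1 h2 : hT, ~ (h1 != 1%g -> h2 != 1%g ->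
    h1 = h2 \/ cyc_adj h1 h2 \/ exists z : hT, cyc_adj h1 z /\ cyc_adj z h2).
  by apply: NNPP => K; apply: H => x y; apply: NNPP => K2; apply: K; exists x, y.
case: Hh => h2 Hh2.
have g11 : g1 != 1%g by case: (eqVneq g1 1%g) => [E|//]; exfalso; apply: Hg2; rewrite E eqxx.
have g21 : g2 != 1%g by case: (eqVneq g2 1%g) => [E|//]; exfalso; apply: Hg2; rewrite E eqxx.
have h11 : h1 != 1%g by case: (eqVneq h1 1%g) => [E|//]; exfalso; apply: Hh2; rewrite E eqxx.
have h21 : h2 != 1%g by case: (eqVneq h2 1%g) => [E|//]; exfalso; apply: Hh2; rewrite E eqxx.
have gne : g1 <> g2 by move=> E; apply: Hg2 => _ _; left.
have gna : ~ cyc_adj g1 g2 by move=> E; apply: Hg2 => _ _; right; left.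
have gnz : ~ (exists z, cyc_adj g1 z /\ cyc_adj z g2) by move=> E; apply: Hg2 => _ _; right; right.
have hne : h1 <> h2 by move=> E; apply: Hh2 => _ _; left.
have hna : ~ cyc_adj h1 h2 by move=> E; apply: Hh2 => _ _; right; left.
have hnz : ~ (exists z, cyc_adj h1 z /\ cyc_adj z h2) by move=> E; apply: Hh2 => _ _; right; right.
have u1 : (g1, h1) != 1%g.
  by apply/negP => /eqP [] E; move/eqP: g11.
have v1 : (g2, h2) != 1%g.
  by apply/negP => /eqP [] E; move/eqP: g21.
case: (D _ _ u1 v1) => [[E _]|[]]; first exact: gne.
  case/and4P => _ _ _ /proj_cyc [cg _].
  by apply: gna; rewrite /cyc_adj g11 g21 cg andbT; apply/eqP.
case=> [[a b]] [/and4P [_ z1 _ /proj_cyc [ca cb]] /and4P [_ _ _ /proj_cyc [ca' cb']]].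
have a1 := @bad_mid _ _ _ _ g11 g21 (introN eqP gne) gna gnz ca ca'.
have b1 := @bad_mid _ _ _ _ h11 h21 (introN eqP hne) hna hnz cb cb'.
by move: z1; rewrite a1 b1 eqxx.
Qed.
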